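(* Let $V$ be an $N$-dimensional vector space over $\mathbb{F}_q$, $\mathcal{F}\subset V$ a spanning family with extended family $\overline{\mathcal{F}}$. Let $W=\bigcap_{j=1}^{N-w}H_j$ where each $H_j$ is a hyperplane generated by vectors in $\mathcal{F}$, and suppose $\dim W=w$. Then there exist $f_1,\dots,f_w\in\overline{\mathcal{F}}$ with $W=\langle f_1,\dots,f_w\rangle$.
   Context: A spanning family is a set $\mathcal{F}$ of pairwise linearly independent nonzero vectors with $\langle\mathcal{F}\rangle=V$. A hyperplane generated by vectors in $\mathcal{F}$ is the span of $N-1$ linearly independent vectors of $\mathcal{F}$. The extended family $\overline{\mathcal{F}}$ is the set of vectors $v\in V$ (one representative per $1$-dimensional subspace) such that $\langle v\rangle$ is an intersection of hyperplanes generated by vectors in $\mathcal{F}$. *)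

(* Defs.v *)
From HB Require Import structures.
From mathcomp Require Import all_boot all_order all_algebra.
Set Implicit Arguments. Unset Strict Implicit. Unset Printing Implicit Defensive.
Import GRing.Theory.
Local Open Scope ring_scope.
Local Open Scope vspace_scope.

(* V = F_q^N is modelled as 'rV[F]_N for a finite field F (q = #|F|). *)

Definition spanning_family (F : finFieldType) (N : nat)
    (fam : {set 'rV[F]_N}) : Prop :=
  [/\ forall u, u \in fam -> u != 0%R,
      forall u v, u \in fam -> v \in fam -> u != v -> free [:: u; v]
    & <<enum fam>>%VS = fullv].

Definition gen_hyperplane (F : finFieldType) (N : nat)
    (fam : {set 'rV[F]_N}) (H : {vspace 'rV[F]_N}) : Prop :=
  exists s : seq 'rV[F]_N,
    [/\ {subset s <= fam}, size s = N.-1, free s & H = <<s>>%VS].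

(* v belongs to the extended family (up to the choice of a representative
   of its line): <v> is an intersection of hyperplanes generated by fam. *)
Definition in_extended_family (F : finFieldType) (N : nat)
    (fam : {set 'rV[F]_N}) (v : 'rV[F]_N) : Prop :=
  v != 0%R /\
  exists Hs : seq {vspace 'rV[F]_N},
    (forall H, H \in Hs -> gen_hyperplane fam H) /\
    <[v]>%VS = (\bigcap_(H <- Hs) H)%VS.

(* Main.v *)
Require Import Defs.
From HB Require Import structures.
From mathcomp Require Import all_boot all_order all_algebra.
From mathcomp Require Import zify.
Import GRing.Theory.
Local Open Scope ring_scope.
Set Implicit Arguments. Unset Strict Implicit.

Lemma dimfull (F : finFieldType) (N : nat) :
  \dim (fullv : {vspace 'rV[F]_N}) = N.
Proof. by rewrite dimvf /dim /= mul1n. Qed.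

Lemma exists_fam_notin (F : finFieldType) (N : nat) (fam : {set 'rV[F]_N})
  (U : {vspace 'rV[F]_N}) :
  <<enum fam>>%VS = fullv -> (\dim U < N)%N -> exists2 x, x \in fam & x \notin U.
Proof.
move=> sp ltU.
have /allPn [x xf xU] : ~~ all (fun x => x \in U) (enum fam).
  apply/negP => /allP sub.
  have : (<<enum fam>> <= U)%VS by apply/span_subvP.
  rewrite sp => /dimvS; rewrite dimfull => le.
  by move: (leq_ltn_trans le ltU); rewrite ltnn.
by exists x => //; rewrite -mem_enum.
Qed.

Lemma greedy (F : finFieldType) (N : nat) (fam : {set 'rV[F]_N}) u :
  spanning_family fam -> u != 0 -> forall k, (k <= N.-1)%N ->
  exists s, [/\ {subset s <= fam}, size s = k, free s & u \notin <<s>>%VS].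
Proof.
case=> _ _ sp u0; elim=> [|k IH] lek.
  by exists [::]; split => //; rewrite ?nil_free // span_nil memv0.
have [s [sf ss fs us]] := IH (ltnW lek).
have dU : (\dim <<u :: s>> < N)%N.
  apply: leq_ltn_trans (dim_span _) _; rewrite /= ss.
  by move: lek; case: (N) => //= n; rewrite ltnS.
have [x xf xU] := exists_fam_notin sp dU.
have sub : (<<s>> <= <<u :: s>>)%VS by rewrite span_cons addvSr.
have uin : u \in <<u :: s>>%VS by apply: memv_span; rewrite mem_head.
exists (x :: s); split.
- by move=> y; rewrite inE => /orP [/eqP -> | /sf].
- by rewrite /= ss.
- rewrite free_cons fs andbT; apply: contra xU; exact: (subvP sub).
- rewrite span_cons; apply/negP => /memv_addP [y /vlineP [c ->] [z zs ez]].
  have [c0 | cn0] := eqVneq c 0.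
    by move: us; rewrite ez c0 scale0r add0r zs.
  have : x = c^-1 *: (u - z).
    by rewrite ez addrK scalerA mulVf // scale1r.
  move=> ex; move: xU; rewrite ex; apply/negP/negPn.
  apply: rpredZ; apply: rpredB => //; exact: (subvP sub).
Qed.

Lemma gen_dim (F : finFieldType) (N : nat) (fam : {set 'rV[F]_N}) K :
  gen_hyperplane fam K -> \dim K = N.-1.
Proof. by case=> s [_ ss fs ->]; rewrite -ss; apply/eqP. Qed.

Lemma hyp_avoid (F : finFieldType) (N : nat) (fam : {set 'rV[F]_N}) u :
  spanning_family fam -> u != 0 ->
  exists K, gen_hyperplane fam K /\ u \notin K.
Proof.
move=> sf u0; have [s [sfam ss fs us]] := greedy sf u0 (leqnn N.-1).
by exists <<s>>%VS; split => //; exists s.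
Qed.

Lemma cut_dim (F : finFieldType) (N : nat) (fam : {set 'rV[F]_N}) K
  (W : {vspace 'rV[F]_N}) u :
  gen_hyperplane fam K -> u \in W -> u \notin K ->
  \dim (K :&: W) = (\dim W).-1.
Proof.
move=> gK uW uK.
have dK := gen_dim gK.
have sc := dimv_sum_cap K W.
have dS := dimvS (subvf (K + W)); rewrite dimfull in dS.
have dW := dimvS (subvf W); rewrite dimfull in dW.
have u0 : u != 0 by apply: contraNneq uK => ->; rewrite mem0v.
have W0 : (0 < \dim W)%N.
  rewrite lt0n dimv_eq0; apply: contra u0 => /eqP W0.
  by move: uW; rewrite W0 memv0.
have lt : (\dim (K :&: W) < \dim W)%N.
  rewrite ltnNge; apply/negP => le.
  have e : (K :&: W)%VS = W by apply/eqP; rewrite eqEdim capvSr le.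
  by move: uW; rewrite -e => /memv_capP [] /[swap] _; apply/negP.
move: sc; rewrite dK; lia.
Qed.

Lemma mainlem (F : finFieldType) (N : nat) (fam : {set 'rV[F]_N}) :
  spanning_family fam -> forall n (Hs : seq {vspace 'rV[F]_N}),
  (forall H, H \in Hs -> gen_hyperplane fam H) ->
  \dim (\bigcap_(H <- Hs) H)%VS = n ->
  exists s, [/\ size s = n, forall v, v \in s -> in_extended_family fam v
            & (\bigcap_(H <- Hs) H)%VS = <<s>>%VS].
Proof.
move=> sf; elim=> [|n IH] Hs gH dW.
  exists [::]; split => //; rewrite span_nil; apply/eqP.
  by rewrite -dimv_eq0 dW.
set W := (\bigcap_(H <- Hs) H)%VS in dW *.
have Wn0 : W != 0%VS by rewrite -dimv_eq0 dW.
case: n IH dW => [|n] IH dW.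
  have v0 : vpick W != 0 by rewrite vpick0.
  have eW : <[vpick W]>%VS = W.
    by apply/eqP; rewrite eqEdim -memvE memv_pick dim_vline v0 dW.
  exists [:: vpick W]; split => //; last by rewrite span_seq1.
  move=> v; rewrite inE => /eqP ->; split => //.
  by exists Hs; split.
have v1 : vpick W != 0 by rewrite vpick0.
have [K1 [gK1 uK1]] := hyp_avoid sf v1.
have d1 : \dim (K1 :&: W)%VS = n.+1 by rewrite (cut_dim gK1 (memv_pick W) uK1) dW.
have W1n0 : (K1 :&: W)%VS != 0%VS by rewrite -dimv_eq0 d1.
have v2 : vpick (K1 :&: W)%VS != 0 by rewrite vpick0.
have [K2 [gK2 uK2]] := hyp_avoid sf v2.
have u2W : vpick (K1 :&: W)%VS \in W by case/memv_capP: (memv_pick (K1 :&: W)%VS).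
have d2 : \dim (K2 :&: W)%VS = n.+1 by rewrite (cut_dim gK2 u2W uK2) dW.
have gH1 : forall H, H \in K1 :: Hs -> gen_hyperplane fam H.
  by move=> H; rewrite inE => /orP [/eqP -> | /gH].
have gH2 : forall H, H \in K2 :: Hs -> gen_hyperplane fam H.
  by move=> H; rewrite inE => /orP [/eqP -> | /gH].
have d1' : \dim (\bigcap_(H <- K1 :: Hs) H)%VS = n.+1 by rewrite big_cons -/W d1.
have [s1 [ss1 es1 E1]] := IH _ gH1 d1'.
have d2' : \dim (\bigcap_(H <- K2 :: Hs) H)%VS = n.+1 by rewrite big_cons -/W d2.
have [s2 [ss2 es2 E2]] := IH _ gH2 d2'.
rewrite big_cons -/W in E1; rewrite big_cons -/W in E2.
have /allPn [v vs2 vW1] : ~~ all (fun v => v \in (K1 :&: W)%VS) s2.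
  apply/negP => /allP sub.
  have : (<<s2>> <= K1 :&: W)%VS by apply/span_subvP.
  rewrite -E2 => sW.
  have e : (K2 :&: W)%VS = (K1 :&: W)%VS by apply/eqP; rewrite eqEdim sW d1 d2 leqnn.
  have : vpick (K1 :&: W)%VS \in (K2 :&: W)%VS by rewrite e memv_pick.
  move=> /memv_capP [] Hk _.
  by rewrite Hk in uK2.
have vW : v \in W.
  by have := memv_span vs2; rewrite -E2 => /memv_capP [].
have fs1 : free s1 by rewrite /free -E1 d1 ss1.
have fv : free (v :: s1) by rewrite free_cons -E1 vW1 fs1.
exists (v :: s1); split.
- by rewrite /= ss1.
- by move=> x; rewrite inE => /orP [/eqP -> | /es1]; [apply: es2 |].
apply/esym/eqP; rewrite eqEdim span_cons subv_add -memvE vW -E1 capvSr /=.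
by rewrite E1 -span_cons (eqP fv) /= ss1 dW.
Qed.

Theorem proposition6p6 (F : finFieldType) (N w : nat)
    (fam : {set 'rV[F]_N}) (H : 'I_(N - w) -> {vspace 'rV[F]_N}) :
  spanning_family fam ->
  (forall j, gen_hyperplane fam (H j)) ->
  \dim (\bigcap_(j < N - w) H j)%VS = w ->
  exists f : 'I_w -> 'rV[F]_N,
    (forall i, in_extended_family fam (f i)) /\
    (\bigcap_(j < N - w) H j)%VS = <<[seq f i | i : 'I_w]>>%VS.
Proof.
move=> sf gH dW.
have gHs : forall K, K \in [seq H j | j <- index_enum 'I_(N - w)] -> gen_hyperplane fam K.
  by move=> K /mapP [j _ ->].
have dW' : \dim (\bigcap_(K <- [seq H j | j <- index_enum 'I_(N - w)]) K)%VS = w by rewrite big_map.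
have [s [ss es E]] := mainlem sf gHs dW'.
rewrite big_map in E.
exists (fun i => nth 0 s i); split.
  by move=> i; apply: es; apply: mem_nth; rewrite ss.
have -> : [seq nth 0 s i | i : 'I_w] = s.
  rewrite -[RHS](mkseq_nth 0 s) ss /mkseq -val_enum_ord -map_comp.
  by apply: eq_map.
exact: E.
Qed.
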